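(* Let $m/n\in(0,1/2]$. Then the set of spans $\Gamma_n^P$ of $\ast$-orbits $P$ of $f_{m/n}$ is totally ordered by inclusion.
   Context: For $n\ge2$, $\Gamma_n\subset D^2$ is an $n$-star: a tree with edges $e_0,\dots,e_{n-1}$ of equal length, each with a valence-1 vertex at its initial point, meeting at their final points at a central vertex $v$ of valence $n$, cyclically ordered by index. For $m/n\in(0,1/2]$ in lowest terms, $f_{m/n}\colon\Gamma_n\to\Gamma_n$ is the tree map with image edge paths $f_{m/n}(e_0)=e_0\bar e_1e_1\bar e_2e_2\cdots\bar e_me_m$ and $f_{m/n}(e_r)=e_{r+_nm}$ for $r\neq0$ (here $\bar e$ is the reverse of $e$ and $+_n$ is addition mod $n$), expanding each edge uniformly away from preimages of vertices. A $\ast$-orbit is a periodic orbit $P$ of $f_{m/n}$ such that: (a) $P\neq\{v\}$; (b) $P\cap e_r\neq\emptyset$ for all $r$; (c) $f_{m/n}(P\cap e_0)\not\subseteq e_m$; (d) if $p_r$ is the point of $P\cap e_r$ closest to the initial point of $e_r$, then $f_{m/n}(p_r)=p_{r+_nm}$ for all $r\neq0$. The span $\Gamma_n^P$ of $P$ is the smallest connected subset of $\Gamma_n$ containing $P$. *)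

(* Defs.v *)
From HB Require Import structures.
From mathcomp Require Import all_boot all_order all_algebra.
From mathcomp Require Import reals.
Set Implicit Arguments. Unset Strict Implicit. Unset Printing Implicit Defensive.
Import Order.TTheory GRing.Theory Num.Theory.
Local Open Scope ring_scope.

(* Model of the n-star Gamma_n (all edges of length 1):
   - [None] is the central vertex v;
   - [Some (r, t)] with r < n and 0 <= t < 1 is the point of edge e_r at
     distance t from the initial (valence-1) vertex of e_r (t = 0 is that
     vertex; t -> 1 approaches v). *)
Definition point (R : realType) := option (nat * R).

Definition valid (R : realType) (n : nat) (x : point R) : Prop :=
  match x with
  | None => True
  | Some (r, t) => (r < n)%N /\ 0 <= t /\ t < 1
  end.

Definition mkpt (R : realType) (r : nat) (t : R) : point R :=
  if t < 1 then Some (r, t) else None.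

Definition coord (R : realType) (x : point R) : R :=
  match x with None => 1 | Some (_, t) => t end.

Definition in_edge (R : realType) (r : nat) (x : point R) : Prop :=
  match x with None => True | Some (r', _) => r' = r end.

Definition dist (R : realType) (x y : point R) : R :=
  match x, y with
  | Some (r, t), Some (r', t') =>
      if r == r' then `|t - t'| else (1 - t) + (1 - t')
  | _, _ => (1 - coord x) + (1 - coord y)
  end.

(* The tree map f_{m/n}.  f(e_0) = e_0 ebar_1 e_1 ... ebar_m e_m: e_0 is cut
   into 2m+1 equal pieces, piece k (0 <= k <= 2m) being mapped affinely onto
   e_0 (k = 0), onto ebar_j (k = 2j-1) or onto e_j (k = 2j, j >= 1).
   f(e_r) = e_{r + m mod n} isometrically for r <> 0; f(v) = v. *)
Definition fmn (R : realType) (m n : nat) (x : point R) : point R :=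
  match x with
  | None => None
  | Some (r, t) =>
      if r != 0%N then mkpt ((r + m) %% n) t
      else
        let s := (m.*2.+1)%:R * t in
        let k := Num.truncn s in
        let u := s - k%:R in
        if k == 0%N then mkpt 0 u
        else if odd k then mkpt k.+1./2 (1 - u)
        else mkpt k./2 u
  end.

Definition periodic_orbit (R : realType) (m n : nat) (P : point R -> Prop) :=
  exists x : point R, valid n x /\
    (exists k, (0 < k)%N /\ iter k (fmn m n) x = x) /\
    (forall y, P y <-> exists j, y = iter j (fmn m n) x).

Definition closest (R : realType) (P : point R -> Prop) (r : nat) (x : point R) :=
  P x /\ in_edge r x /\
  forall y, P y -> in_edge r y -> coord x <= coord y.

Definition star_orbit (R : realType) (m n : nat) (P : point R -> Prop) : Prop :=
  [/\ periodic_orbit m n P,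
      ~ (forall y, P y <-> y = None),
      (forall r, (r < n)%N -> exists x, P x /\ in_edge r x),
      (exists x, [/\ P x, in_edge 0 x & ~ in_edge m (fmn m n x)])
    & (forall r, (0 < r < n)%N -> forall x,
                   closest P r x -> closest P ((r + m) %% n) (fmn m n x))].

Definition open_in (R : realType) (n : nat) (U : point R -> Prop) : Prop :=
  forall x, valid n x -> U x ->
    exists2 e : R, 0 < e &
      forall y, valid n y -> dist x y < e -> U y.

Definition connected_in (R : realType) (n : nat) (A : point R -> Prop) : Prop :=
  forall U V : point R -> Prop, open_in n U -> open_in n V ->
    (forall x, A x -> U x \/ V x) ->
    (forall x, ~ [/\ A x, U x & V x]) ->
    (forall x, A x -> U x) \/ (forall x, A x -> V x).

Definition tspan (R : realType) (n : nat) (P : point R -> Prop) (y : point R) : Prop :=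
  valid n y /\
  forall A : point R -> Prop, (forall x, A x -> valid n x) ->
    connected_in n A -> (forall x, P x -> A x) -> A y.

(* Main.v *)
Require Import Defs.
From HB Require Import structures.
From mathcomp Require Import all_boot all_order all_algebra.
From mathcomp Require Import reals.
From mathcomp Require Import ring lra zify.
From Stdlib Require Import Classical.
Set Implicit Arguments. Unset Strict Implicit. Unset Printing Implicit Defensive.
Import Order.TTheory GRing.Theory Num.Theory.
Local Open Scope ring_scope.

Local Notation coord := Defs.coord.
Section S.
Variable R : realType.

Lemma fmn_valid (m n : nat) (x : point R) :
  (m < n)%N -> valid n x -> valid n (fmn m n x).
Proof.
move=> mn; case: x => [[r t]|] //= [rn [t0 t1]].
have n0 : (0 < n)%N by lia.
case: ifP => r0.
  rewrite /mkpt t1 /=; split; [by rewrite ltn_mod|by []].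
set s := (m.*2.+1)%:R * t.
have s0 : 0 <= s by rewrite /s mulr_ge0.
have [sl su] := andP (truncn_itv s0).
set k := Num.truncn s in sl su *.
have kle : (k <= m.*2)%N.
  rewrite /k truncn_le_nat; rewrite /s.
  have : (m.*2.+1)%:R * t < (m.*2.+1)%:R * 1 :> R.
    by rewrite ltr_pM2l // ltr0n.
  by rewrite mulr1.
have u0 : 0 <= s - k%:R by rewrite subr_ge0.
have u1 : s - k%:R < 1.
  by move: su; rewrite -addn1 natrD; lra.
case: ifP => _; first by rewrite /mkpt u1 /=; split => //; lia.
case: ifP => _.
  rewrite /mkpt; case: ifP => // h /=; split; [lia|lra].
rewrite /mkpt u1 /=; split; [lia|lra].
Qed.

Definition hgt (r : nat) (z : point R) : R :=
  match z with None => 1 | Some (r', t) => if r' == r then t else 2 - t end.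

Lemma hgt_lip n r (x z : point R) : valid n x -> valid n z ->
  `|hgt r x - hgt r z| <= dist x z.
Proof.
case: x => [[a s]|]; case: z => [[b u]|] /=.
- move=> [_ [s0 s1]] [_ [u0 u1]].
  case: (eqVneq a b) => [E|ab].
    rewrite E; case: ifP => _; first exact: lexx.
    have -> : 2 - s - (2 - u) = u - s by ring.
    by rewrite distrC.

  case: ifP => ar; case: ifP => br.
  + by move: ab; rewrite (eqP ar) (eqP br) eqxx.
  + rewrite ler_norml; apply/andP; split; lra.
  + rewrite ler_norml; apply/andP; split; lra.
  + rewrite ler_norml; apply/andP; split; lra.
- move=> [_ [s0 s1]] _; case: ifP => _; rewrite ler_norml; apply/andP; split; lra.
- move=> _ [_ [u0 u1]]; case: ifP => _; rewrite ler_norml; apply/andP; split; lra.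
- move=> _ _; rewrite subrr normr0; lra.
Qed.

Lemma hgt_lt_open n r (t : R) : open_in n (fun z => hgt r z < t).
Proof.
move=> x vx hx; exists (t - hgt r x); first lra.
move=> y vy d; have := hgt_lip r vx vy; rewrite ler_norml; lra.
Qed.

Lemma hgt_gt_open n r (t : R) : open_in n (fun z => t < hgt r z).
Proof.
move=> x vx hx; exists (hgt r x - t); first lra.
move=> y vy d; have := hgt_lip r vx vy; rewrite ler_norml; lra.
Qed.

Lemma hgt_pick n (y : point R) : (1 < n)%N -> valid n y ->
  exists r, [/\ (r < n)%N, hgt r y = coord y &
    (forall z, valid n z -> hgt r z = coord y -> z = y)].
Proof.
move=> n1; case: y => [[a s]|] /=.
  move=> [an [s0 s1]]; exists a; split => //; first by rewrite eqxx.
  case=> [[b u]|] /=; last by move=> _ E; exfalso; lra.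
  move=> [_ [_ u1]]; case: ifP => [/eqP -> -> //|_ E]; exfalso; lra.
move=> _; exists 0%N; split => //; first lia.
case=> [[b u]|] //= [_ [_ u1]]; case: ifP => _ E; exfalso; lra.
Qed.

Lemma conn_fill n (A : point R -> Prop) (c : R) :
  (1 < n)%N -> 0 <= c < 1 ->
  (forall x, A x -> valid n x) -> connected_in n A ->
  (forall r, (r < n)%N -> A (Some (r, c))) ->
  forall y, valid n y -> c <= coord y -> A y.
Proof.
move=> n1 /andP[c0 c1] Av Ac Ar y vy cy.
apply: NNPP => nAy.
have [r [rn ht yuniq]] := hgt_pick n1 vy.
set t := coord y in ht yuniq cy *.
have t1 : t <= 1 by rewrite /t; case: (y) vy => [[??] /= [_ [_ ?]]|] //=; lra.
have cov : forall x, A x -> hgt r x < t \/ t < hgt r x.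
  move=> x Ax; have vx := Av x Ax.
  have : hgt r x != t by apply/eqP => /(yuniq x vx) E; apply: nAy; rewrite -E.
  by rewrite neq_lt => /orP[]; [left|right].
have dis : forall x, ~ [/\ A x, hgt r x < t & t < hgt r x].
  by move=> x [_ h1 h2]; lra.
case: (Ac (fun z => hgt r z < t) (fun z => t < hgt r z)
  (@hgt_lt_open n r t) (@hgt_gt_open n r t) cov dis) => [AU|AV].
  have rn' : (r.+1 %% n < n)%N by rewrite ltn_mod; lia.
  have := AU _ (Ar _ rn').
  rewrite /=; case: ifP => [/eqP|_]; last lra.
  case: (ltnP r.+1 n) => h; first by rewrite modn_small //; lia.
  have -> : r.+1 = n by lia.
  rewrite modnn; lia.
have := AV _ (Ar r rn); rewrite /= eqxx; lra.
Qed.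

Lemma iter_mul (T : Type) (f : T -> T) x k a : iter k f x = x -> iter (a * k) f x = x.
Proof. by move=> h; elim: a => [|a IH] //; rewrite mulSn iterD IH h. Qed.

Lemma iter_rep (T : Type) (f : T -> T) x k j : iter k f x = x ->
  iter j f x = iter (j %% k)%N f x.
Proof.
move=> h; rewrite {1}(divn_eq j k) addnC iterD iter_mul //.
Qed.

Lemma argmin_nat (Qp : nat -> Prop) (g : nat -> R) K :
  (exists j, (j < K)%N /\ Qp j) ->
  exists j, [/\ (j < K)%N, Qp j & forall j', (j' < K)%N -> Qp j' -> g j <= g j'].
Proof.
elim: K => [[j [] //]|K IH] ex.
case: (classic (exists j, (j < K)%N /\ Qp j)) => [ex'|nex].
  have [j0 [j0K Qj0 H]] := IH ex'.
  case: (classic (Qp K /\ g K < g j0)) => [[QK lt]|nlt].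
    exists K; split => // j' j'K Qj'.
    case: (ltnP j' K) => h; first by have := H j' h Qj'; lra.
    by have -> : j' = K by lia.
  exists j0; split => //; first lia.
  move=> j' j'K Qj'; case: (ltnP j' K) => h; first exact: H.
  have E : j' = K by lia.
  subst j'; rewrite leNgt; apply/negP => lt; exact: nlt.
have QK : Qp K.
  case: ex => j [jK Qj]; case: (ltnP j K) => h; first by exfalso; apply: nex; exists j.
  by have <- : j = K by lia.
exists K; split => // j' j'K Qj'; case: (ltnP j' K) => h.
  by exfalso; apply: nex; exists j'.
by have -> : j' = K by lia.
Qed.

Lemma iter_none m n j : iter j (fmn m n) (None : point R) = None.
Proof. by elim: j => //= j ->. Qed.

Lemma star_key m n (P : point R -> Prop) :
  (0 < m)%N -> (m.*2 <= n)%N -> coprime m n -> star_orbit m n P ->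
  exists c : R, [/\ 0 <= c < 1, (forall z, P z -> valid n z /\ c <= coord z)
     & (forall r, (r < n)%N -> P (Some (r, c)))].
Proof.
move=> m0 mn cop [[x0 [vx0 [[k [k0 kx]] Pd]]] Pa Pb Pc Pd'].
have mn' : (m < n)%N by lia.
have n0 : (0 < n)%N by lia.
have Pval : forall z, P z -> valid n z.
  move=> z /Pd [j ->]; elim: j => //= j IH; exact: fmn_valid.
have Prep : forall z, P z -> exists j, (j < k)%N /\ z = iter j (fmn m n) x0.
  move=> z /Pd [j ->]; exists (j %% k)%N; split; first by rewrite ltn_mod.
  exact: iter_rep.
have Pnone : forall z, P z -> z <> None.
  move=> z /Pd [j ->] E; apply: Pa => y; split.
    move=> /Pd [j' ->].
    have x0N : x0 = None.
      rewrite -(iter_mul j kx) (_ : (j * k) = (j * k - j) + j)%N; last first.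
        by rewrite subnK // leq_pmulr.
      by rewrite iterD E iter_none.
    by rewrite x0N iter_none.
  move=> ->; apply/Pd; exists 0%N => /=.
  rewrite -(iter_mul j kx) (_ : (j * k) = (j * k - j) + j)%N; last first.
    by rewrite subnK // leq_pmulr.
  by rewrite iterD E iter_none.
have clex : forall r, (r < n)%N -> exists x, closest P r x.
  move=> r rn; have [x [Px ex]] := Pb r rn.
  have [j [jk xj]] := Prep x Px.
  rewrite xj in ex.
  have [j0 [j0k Q0 H]] := @argmin_nat (fun j => in_edge r (iter j (fmn m n) x0))
     (fun j => coord (iter j (fmn m n) x0)) k (ex_intro _ j (conj jk ex)).
  exists (iter j0 (fmn m n) x0); split; first by apply/Pd; exists j0.
  split => //.
  move=> y Py ey; have [j' [j'k yj]] := Prep y Py; subst y; exact: H.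
have cluniq : forall r x x', closest P r x -> closest P r x' -> coord x = coord x'.
  move=> r x x' [Px [ex Hx]] [Px' [ex' Hx']]; apply/eqP; rewrite eq_le.
  by rewrite Hx // Hx'.
have clshape : forall r x, closest P r x -> exists t, x = Some (r, t).
  move=> r [[r' t]|] [Px [ex _]] /=; last by have := Pnone _ Px.
  by exists t; rewrite /in_edge in ex; rewrite ex.
have step : forall r x, (0 < r < n)%N -> closest P r x ->
    forall x', closest P ((r + m) %% n)%N x' -> coord x' = coord x.
  move=> r x rr cx x' cx'.
  have cfx := Pd' r rr x cx.
  rewrite (cluniq _ _ _ cx' cfx).
  have [t xt] := clshape _ _ cx; subst x.
  have [_ [_ t1]] := Pval _ (proj1 cx).
  rewrite /=; have -> : (r != 0%N) by lia.
  by rewrite /mkpt t1.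
have [p0 cp0] := clex 0%N n0.
set c := coord p0.
have chain : forall i, (i < n)%N -> forall x,
    closest P (((n - i) * m) %% n)%N x -> coord x = c.
  elim => [_ x|i IH lt x].
    by rewrite subn0 modnMr => cx; rewrite /c (cluniq _ _ _ cx cp0).
  set j := (n - i.+1)%N.
  have j0 : (0 < j)%N by rewrite /j; lia.
  have jn : (j < n)%N by rewrite /j; lia.
  set r := ((j * m) %% n)%N.
  have r0 : (0 < r)%N.
    have : ~~ (n %| j * m)%N.
      have cnm : coprime n m by rewrite coprime_sym.
      by rewrite (Gauss_dvdl _ cnm) gtnNdvd.
    by rewrite /dvdn lt0n.
  have rn : (r < n)%N by rewrite /r ltn_mod.
  move=> cx.
  have E : ((r + m) %% n = ((n - i) * m) %% n)%N.
    have -> : (n - i = j.+1)%N by rewrite /j; lia.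
    by rewrite /r modnDml mulSn addnC.
  have rmn : ((r + m) %% n < n)%N by rewrite ltn_mod.
  have [x' cx'] := clex _ rmn.
  have := step r x ((introT andP (conj r0 rn))) cx x' cx'.
  rewrite E in cx'; rewrite (IH (ltnW lt) x' cx') => ->.
  by [].
have allr : forall r, (r < n)%N -> forall x, closest P r x -> coord x = c.
  move=> r rn x cx.
  have [a an] := Bezoutr m n0.
  move: cop; rewrite /coprime => /eqP ->.
  move=> dv.
  set J := ((n - r) * a)%N.
  have JE : ((J * m) %% n = r)%N.
    have d2 : ((J * m + (n - r)) %% n = 0)%N.
      apply/eqP; rewrite -/(dvdn n _).
      have -> : (J * m + (n - r) = (n - r) * (1 + a * m))%N.
        by rewrite /J mulnDr muln1 addnC mulnA.
      exact: dvdn_mull.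
    have : ((J * m + n) %% n = ((J * m + (n - r)) + r) %% n)%N.
      by congr (_ %% _)%N; lia.
    by rewrite modnDr => ->; rewrite -modnDml d2 add0n modn_small.
  case: (posnP (J %% n)%N) => Jn.
    have r0 : r = 0%N by rewrite -JE -modnMml Jn mul0n mod0n.
    by move: cx; rewrite r0 => cx; rewrite /c (cluniq _ _ _ cx cp0).
  have Jlt : (J %% n < n)%N by rewrite ltn_mod.
  apply: (chain (n - J %% n)%N); first lia.
  have -> : (n - (n - J %% n) = J %% n)%N by lia.
  by rewrite modnMml JE.
exists c; split.
- have := Pval _ (proj1 cp0); have := Pnone _ (proj1 cp0).
  rewrite /c; case: (p0) => [[r t]|] //= _ [_ [t0 t1]]; apply/andP; split; assumption.
- move=> z Pz; split; first exact: Pval.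
  have := Pval _ Pz; have := Pnone _ Pz.
  case: z Pz => [[r t]|] //= Pz _ [rn _].
  have [p cp] := clex r rn.
  rewrite -(allr r rn p cp).
  exact: (proj2 (proj2 cp) (Some (r, t)) Pz erefl).
- move=> r rn; have [p cp] := clex r rn.
  have [t pt] := clshape _ _ cp.
  have := allr r rn p cp; rewrite pt /= => <-.
  by rewrite -pt; exact: (proj1 cp).
Qed.

Lemma span_incl n (P Q : point R -> Prop) (cP cQ : R) :
  (1 < n)%N -> 0 <= cP < 1 -> cP <= cQ ->
  (forall z, Q z -> valid n z /\ cQ <= coord z) ->
  (forall r, (r < n)%N -> P (Some (r, cP))) ->
  forall y, tspan n Q y -> tspan n P y.
Proof.
move=> n1 cP01 le Qlow Pr y [vy H]; split => // A Av Ac PA.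
apply: H => // z Qz; have [vz cz] := Qlow z Qz.
apply: (conn_fill n1 cP01 Av Ac) => //; last lra.
by move=> r rn; apply: PA; apply: Pr.
Qed.

End S.

Theorem lemma2p2 (R : realType) (m n : nat) :
  (0 < m)%N -> (m.*2 <= n)%N -> coprime m n ->
  forall P Q : point R -> Prop, star_orbit m n P -> star_orbit m n Q ->
    (forall y, tspan n P y -> tspan n Q y) \/ (forall y, tspan n Q y -> tspan n P y).
Proof.
move=> m0 mn cop P Q sP sQ.
have n1 : (1 < n)%N by lia.
have [cP [cP01 Plow Pr]] := star_key m0 mn cop sP.
have [cQ [cQ01 Qlow Qr]] := star_key m0 mn cop sQ.
case: (lerP cP cQ) => h.
  by right; apply: (span_incl n1 cP01 h).
by left; apply: (span_incl n1 cQ01 (ltW h)).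
Qed.
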